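(* Let $R$ be a $*$-ring with $2\in U(R)$. Then every $u\in R$ with $u^2=1$ satisfies $u^*=u$ if and only if every idempotent of $R$ is a projection.
   Context: A $*$-ring is a ring with identity with an involution $*$. A projection is $p$ with $p^2=p=p^*$. $U(R)$ is the unit group. *)

(* Defs.v *)
From HB Require Import structures.
From mathcomp Require Import all_boot all_algebra.
Set Implicit Arguments. Unset Strict Implicit. Unset Printing Implicit Defensive.
Import GRing.Theory.
Local Open Scope ring_scope.

Definition is_involution (R : pzRingType) (star : R -> R) : Prop :=
  [/\ forall x y : R, star (x + y) = star x + star y,
      forall x y : R, star (x * y) = star y * star x
    & forall x : R, star (star x) = x].

Definition idempotent_el (R : pzRingType) (e : R) : Prop := e * e = e.

Definition is_projection (R : pzRingType) (star : R -> R) (p : R) : Prop :=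
  p * p = p /\ p = star p.

Definition in_units (R : pzRingType) (x : R) : Prop :=
  exists y : R, x * y = 1 /\ y * x = 1.

(* Main.v *)
Require Import Defs.
From mathcomp Require Import all_boot all_algebra.
Local Open Scope ring_scope.
Import GRing.Theory.

Theorem lemma2p3 (R : pzRingType) (star : R -> R)
  (Hstar : is_involution star) (H2 : in_units (2%:R : R)) :
  (forall u : R, u ^+ 2 = 1 -> star u = u) <->
  (forall e : R, idempotent_el e -> is_projection star e).
Proof.
case: Hstar => sD sM sK; case: H2 => y [Hy1 Hy2].
have s0 : star 0 = 0.
  by have := sD 0 0; rewrite addr0 => H; apply: (addrI (star 0)); rewrite -H addr0.
have sN : forall x, star (- x) = - star x.
  move=> x; apply/eqP; rewrite -subr_eq0 opprK -sD addNr s0 //.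
have sB : forall x z, star (x - z) = star x - star z by move=> x z; rewrite sD sN.
have s1 : star 1 = 1.
  by rewrite -[star 1]mulr1 -{2}(sK 1) -sM mulr1 sK.
have sn : forall x n, star (x *+ n) = star x *+ n.
  move=> x; elim=> [|n IH]; first by rewrite !mulr0n s0.
  by rewrite !mulrS sD IH.
have ycomm : forall x, y * x = x * y.
  move=> x; transitivity (y * (x * 2%:R) * y); first by rewrite -!mulrA Hy1 mulr1.
  by rewrite mulr_natr -mulr_natl mulrA Hy2 mul1r.
have canc : forall a b : R, a *+ 2 = b *+ 2 -> a = b.
  move=> a b H; by rewrite -[a]mul1r -[b]mul1r -Hy2 -!mulrA !mulr_natl H.
split.
- move=> Hu e He; split => //.
  have Hu' : (1 - e *+ 2) ^+ 2 = 1.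
    rewrite expr2 mulrBl mul1r mulrBr mulr1 mulrnAl mulrnAr He -mulrnA.
    rewrite (_ : e *+ (2 * 2) = e *+ 2 + e *+ 2); last by rewrite -mulrnDr.
    by rewrite opprB addrK subrK.
  have := Hu _ Hu'; rewrite sB s1 sn => H.
  apply: canc; apply: oppr_inj; apply: (addrI 1); by rewrite H.
- move=> He u Hu.
  have Hid : idempotent_el (y * (1 + u)).
    rewrite /idempotent_el mulrA -[y * (1 + u) * y]mulrA -ycomm mulrA -mulrA.
    have -> : (1 + u) * (1 + u) = (1 + u) *+ 2.
      by rewrite mulrDl !mulrDr !mul1r !mulr1 -expr2 Hu mulr2n (addrC u 1).
    by rewrite -mulr_natl -mulrA (mulrA y 2%:R) Hy2 mul1r.
  have [_ E] := He _ Hid.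
  have sy : star y = y.
    have s2 : star 2%:R = 2%:R :> R by rewrite sn s1.
    have : star y * 2%:R = 1 by rewrite -s2 -sM Hy1 s1.
    by move=> H; rewrite -[star y]mulr1 -Hy1 mulrA H mul1r.
  move: E; rewrite sM sy -ycomm sD s1 => E.
  have E2 : 2%:R * (y * (1 + star u)) = 2%:R * (y * (1 + u)) by rewrite E.
  rewrite !mulrA Hy1 !mul1r in E2.
  exact: (addrI 1 E2).
Qed.
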